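(* Let $\Phi$ be a $\mathsf{BST}^{\otimes}$-conjunction with $n$ distinct variables. Then $\Phi$ is satisfiable if and only if $\Phi$ is fulfilled by an accessible $\otimes$-graph of size at most $2^{n}-1$.
   Context: Sets range over the von Neumann universe of well-founded sets. For sets $s,t$, the unordered Cartesian product is $s\otimes t=\{\{u,v\} : u\in s,\ v\in t\}$. A $\mathsf{BST}^{\otimes}$-formula is a propositional combination of atoms $x=y\cup z$, $x=y\cap z$, $x=y\setminus z$, $x=y\otimes z$, $x\subseteq y$, where $x,y,z$ are set variables; $\mathrm{Vars}(\Phi)$ denotes the variables occurring in $\Phi$. A set assignment $M$ maps variables to sets; $M$ satisfies $\Phi$ if $\Phi$ is true when each variable $v$ is interpreted as $Mv$ and the operators and relators have their usual meaning. $\Phi$ is satisfiable if some set assignment on $\mathrm{Vars}(\Phi)$ satisfies it. A $\mathsf{BST}^{\otimes}$-conjunction is a finite conjunction of literals of the forms $x=y\cup z$, $x=y\setminus z$, $x=y\otimes z$, $x\neq y$. A $\otimes$-graph $\mathcal G=(\mathcal P,\mathcal N,\mathcal T)$ consists of a set $\mathcal P$ of places, the set of nodes $\mathcal N=\mathcal P\otimes\mathcal P$ (i.e. the nonempty subsets of $\mathcal P$ with at most two elements), where $\mathcal P\cap\mathcal N=\emptyset$, and a target map $\mathcal T:\mathcal N\to\mathcal P(\mathcal P)$ (power set); the elements of $\mathcal T(A)$ are the targets of $A$. The size of $\mathcal G$ is $|\mathcal P|$. A place is a source place if it is a target of no node; otherwise it is a $\otimes$-place. A node $A$ is a $\otimes$-node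 if $\mathcal T(A)\neq\emptyset$. The set of accessible places is the smallest set of places containing all source places and containing $\mathcal T(A)$ for every node $A$ all of whose places belong to it. $\mathcal G$ is accessible if all its places are accessible. A map $\mathfrak F:\mathrm{Vars}(\Phi)\to\mathcal P(\mathcal P)$ is a $\mathcal G$-fulfilling map for a $\mathsf{BST}^{\otimes}$-conjunction $\Phi$ if: (a) $\mathfrak F(x)=\mathfrak F(y)\star\mathfrak F(z)$ for each conjunct $x=y\star z$ with $\star\in\{\cup,\setminus\}$; (b) $\mathfrak F(x)\neq\mathfrak F(y)$ for each conjunct $x\neq y$; (c) for each conjunct $x=y\otimes z$: (c1) $\emptyset\neq\mathcal T(\{\upsilon,\zeta\})\subseteq\mathfrak F(x)$ for all $\upsilon\in\mathfrak F(y)$, $\zeta\in\mathfrak F(z)$; (c2) $\mathfrak F(x)\subseteq\bigcup\{\mathcal T(A): A\in\mathfrak F(y)\otimes\mathfrak F(z)\}$; (c3) $\bigcup\{\mathcal T(A): A\in\mathcal N\setminus(\mathfrak F(y)\otimes\mathfrak F(z))\}\cap\mathfrak F(x)=\emptyset$. $\mathcal G$ fulfills $\Phi$ if a $\mathcal G$-fulfilling map for $\Phi$ exists. *)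

(* Defs.v *)
From mathcomp Require Import all_boot.
Set Implicit Arguments. Unset Strict Implicit. Unset Printing Implicit Defensive.

Inductive WFSet : Type := sup (A : Type) (f : A -> WFSet).

Fixpoint seteq (x y : WFSet) {struct x} : Prop :=
  match x, y with
  | sup A f, sup B g =>
      (forall a, exists b, seteq (f a) (g b)) /\
      (forall b, exists a, seteq (f a) (g b))
  end.

Definition setin (x y : WFSet) : Prop :=
  match y with sup B g => exists b, seteq x (g b) end.

Definition is_pair (w u v : WFSet) : Prop :=
  forall t, setin t w <-> (seteq t u \/ seteq t v).

Definition var := nat.

Inductive literal : Type :=
  | LUnion  (x y z : var)   (* x = y \cup z     *)
  | LDiff   (x y z : var)   (* x = y \setminus z *)
  | LOtimes (x y z : var)   (* x = y \otimes z  *)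
  | LNeq    (x y : var).

Definition conjunction := seq literal.

Definition lit_vars (l : literal) : seq var :=
  match l with
  | LUnion x y z | LDiff x y z | LOtimes x y z => [:: x; y; z]
  | LNeq x y => [:: x; y]
  end.

Definition vars (Phi : conjunction) : seq var := flatten (map lit_vars Phi).

Definition nvars (Phi : conjunction) : nat := size (undup (vars Phi)).

Definition sat_lit (M : var -> WFSet) (l : literal) : Prop :=
  match l with
  | LUnion x y z => forall w, setin w (M x) <-> (setin w (M y) \/ setin w (M z))
  | LDiff x y z => forall w, setin w (M x) <-> (setin w (M y) /\ ~ setin w (M z))
  | LOtimes x y z => forall w, setin w (M x) <->
        exists u v, setin u (M y) /\ setin v (M z) /\ is_pair w u v
  | LNeq x y => ~ seteq (M x) (M y)
  end.

Definition satisfies (M : var -> WFSet) (Phi : conjunction) : Prop :=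
  foldr (fun l P => sat_lit M l /\ P) True Phi.

Definition satisfiable (Phi : conjunction) : Prop :=
  exists M : var -> WFSet, satisfies M Phi.

(* Places are the elements of a finite type P; nodes are the nonempty subsets
   of P with at most two elements; the target map is only relevant on nodes. *)
Definition is_node (P : finType) (A : {set P}) : bool := (0 < #|A| <= 2)%N.

Definition target_map (P : finType) := {set P} -> {set P}.

Definition source_place (P : finType) (T : target_map P) (p : P) : Prop :=
  forall A : {set P}, is_node A -> p \notin T A.

Definition acc_closed (P : finType) (T : target_map P) (S : {set P}) : Prop :=
  (forall p, source_place T p -> p \in S) /\
  (forall A : {set P}, is_node A -> A \subset S -> T A \subset S).

Definition accessible_place (P : finType) (T : target_map P) (p : P) : Prop :=
  forall S : {set P}, acc_closed T S -> p \in S.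

Definition accessible_graph (P : finType) (T : target_map P) : Prop :=
  forall p : P, accessible_place T p.

Definition in_otimes (P : finType) (X Y A : {set P}) : Prop :=
  exists u v, u \in X /\ v \in Y /\ A = [set u; v].

Definition fulfill_lit (P : finType) (T : target_map P) (F : var -> {set P})
    (l : literal) : Prop :=
  match l with
  | LUnion x y z => F x = F y :|: F z
  | LDiff x y z => F x = F y :\: F z
  | LNeq x y => F x <> F y
  | LOtimes x y z =>
      (forall u v, u \in F y -> v \in F z ->
          T [set u; v] != set0 /\ T [set u; v] \subset F x) /\
      (forall p, p \in F x -> exists A, in_otimes (F y) (F z) A /\ p \in T A) /\
      (* (c3) *)
      (forall A, is_node A -> ~ in_otimes (F y) (F z) A -> [disjoint T A & F x])
  end.

Definition fulfilling_map (P : finType) (T : target_map P) (F : var -> {set P})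
    (Phi : conjunction) : Prop :=
  foldr (fun l Q => fulfill_lit T F l /\ Q) True Phi.

Definition fulfills (P : finType) (T : target_map P) (Phi : conjunction) : Prop :=
  exists F : var -> {set P}, fulfilling_map T F Phi.

(* Main.v *)
Require Import Defs.
From mathcomp Require Import all_boot.
From Stdlib Require Import Classical ClassicalEpsilon.
Set Implicit Arguments. Unset Strict Implicit. Unset Printing Implicit Defensive.

Definition pb (A : Prop) : bool := if excluded_middle_informative A then true else false.
Lemma pbP (A : Prop) : reflect A (pb A).
Proof. rewrite /pb; case: excluded_middle_informative => H; by constructor. Qed.
Lemma pb_iff (A B : Prop) : (A <-> B) -> pb A = pb B.
Proof. move=> H; apply/idP/idP => /pbP h; apply/pbP; tauto. Qed.

Lemma seteq_refl x : seteq x x.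
Proof. elim: x => A f IH /=; split => a; exists a; apply: IH. Qed.

Lemma seteq_sym x y : seteq x y -> seteq y x.
Proof.
elim: x y => A f IH [B g] /= [H1 H2]; split.
- move=> b; have [a Ha] := H2 b; exists a; exact: IH.
- move=> a; have [b Hb] := H1 a; exists b; exact: IH.
Qed.

Lemma seteq_trans x y z : seteq x y -> seteq y z -> seteq x z.
Proof.
elim: x y z => A f IH [B g] [C h] /= [H1 H2] [K1 K2]; split.
- move=> a; have [b Hb] := H1 a; have [c Hc] := K1 b; exists c; exact: IH Hb Hc.
- move=> c; have [b Hb] := K2 c; have [a Ha] := H2 b; exists a; exact: IH Ha Hb.
Qed.

Lemma setin_l a b X : seteq a b -> setin a X -> setin b X.
Proof.
case: X => B g /= H [i Hi]; exists i; apply: seteq_trans Hi; exact: seteq_sym.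
Qed.

Lemma setin_r a X Y : seteq X Y -> setin a X -> setin a Y.
Proof.
case: X => A f; case: Y => B g /= [H1 H2] [i Hi].
have [j Hj] := H1 i; exists j; exact: seteq_trans Hi Hj.
Qed.

Lemma set_ext X Y : (forall t, setin t X <-> setin t Y) -> seteq X Y.
Proof.
case: X => A f; case: Y => B g /= H; split.
- move=> a; have [b Hb] := (proj1 (H (f a))) (ex_intro _ a (seteq_refl _)).
  by exists b.
- move=> b; have [a Ha] := (proj2 (H (g b))) (ex_intro _ b (seteq_refl _)).
  exists a; exact: seteq_sym.
Qed.

Definition pr (a b : WFSet) : WFSet := sup (fun x : bool => if x then a else b).

Lemma pr_pair a b : is_pair (pr a b) a b.
Proof.
move=> t /=; split.
- by case=> [[]] H; [left|right].
- by case=> H; [exists true | exists false].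
Qed.

Lemma is_pair_sym w a b : is_pair w a b -> is_pair w b a.
Proof. move=> H t; rewrite H; tauto. Qed.

Lemma is_pair_eq w a b : is_pair w a b -> seteq w (pr a b).
Proof. move=> H; apply: set_ext => t; rewrite H pr_pair; tauto. Qed.

Lemma pair_inj w a b w' c d : is_pair w a b -> is_pair w' c d -> seteq w w' ->
  (seteq a c /\ seteq b d) \/ (seteq a d /\ seteq b c).
Proof.
move=> H1 H2 E.
have ina : setin a w' by apply: setin_r E _; apply/H1; left; exact: seteq_refl.
have inb : setin b w' by apply: setin_r E _; apply/H1; right; exact: seteq_refl.
have inc : setin c w by apply: setin_r (seteq_sym E) _; apply/H2; left; exact: seteq_refl.
have ind : setin d w by apply: setin_r (seteq_sym E) _; apply/H2; right; exact: seteq_refl.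
move/H2: ina => ina; move/H2: inb => inb; move/H1: inc => inc; move/H1: ind => ind.
case: ina => ha; case: inb => hb.
- case: ind => hd.
  + left; split => //; apply: seteq_trans hb _; apply: seteq_sym; apply: seteq_trans hd ha.
  + left; split => //; exact: seteq_sym.
- by left.
- by right.
- case: inc => hc.
  + right; split => //; apply: seteq_trans hb _; apply: seteq_sym; apply: seteq_trans hc ha.
  + right; split => //; exact: seteq_sym.
Qed.

Fixpoint inlit (l : literal) (Phi : conjunction) : Prop :=
  match Phi with [::] => False | l' :: P => l = l' \/ inlit l P end.

Lemma sat_all M Phi : satisfies M Phi -> forall l, inlit l Phi -> sat_lit M l.
Proof. elim: Phi => //= l' P IH [H1 H2] l [->|H] //; exact: IH. Qed.

Lemma fulfill_all (P : finType) (T : target_map P) F Phi :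
  (forall l, inlit l Phi -> fulfill_lit T F l) -> fulfilling_map T F Phi.
Proof. elim: Phi => //= l' P' IH H; split; [apply: H; by left | apply: IH => l Hl; apply: H; by right]. Qed.

Lemma inlit_vars l Phi v : inlit l Phi -> v \in lit_vars l -> v \in vars Phi.
Proof.
elim: Phi => //= l' P IH [->|H] Hv; rewrite /vars /= mem_cat.
- by rewrite Hv.
- by rewrite (IH H Hv) orbT.
Qed.

Lemma set2_eq (P : finType) (a b c d : P) :
  [set a; b] = [set c; d] -> (a = c /\ b = d) \/ (a = d /\ b = c).
Proof.
move=> E.
have ha : a \in [set c; d] by rewrite -E set21.
have hb : b \in [set c; d] by rewrite -E set22.
have hc : c \in [set a; b] by rewrite E set21.
have hd : d \in [set a; b] by rewrite E set22.
move: ha hb hc hd; rewrite !inE => /orP[]/eqP ha /orP[]/eqP hb /orP[]/eqP hc /orP[]/eqP hd;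
  subst; auto.
Qed.

Lemma node2 (P : finType) (a b : P) : is_node [set a; b].
Proof. by rewrite /is_node cards2; case: (a != b). Qed.

Lemma node_inv (P : finType) (A : {set P}) : is_node A -> exists a b, A = [set a; b].
Proof.
rewrite /is_node => /andP[h1 h2].
have : (#|A| == 1) || (#|A| == 2) by move: h1 h2; case: #|A| => [|[|[|]]].
case/orP.
- by case/cards1P => x ->; exists x, x; rewrite setUid.
- by case/cards2P => x [y [_ ->]]; exists x, y.
Qed.

Section Sat.
Variables (Phi : conjunction) (M : var -> WFSet) (HM : satisfies M Phi).
Local Notation vs := (undup (vars Phi)).
Local Notation n := (size (undup (vars Phi))).

Definition sigw (w : WFSet) : {set 'I_n} :=
  [set i : 'I_n | pb (setin w (M (nth 0 vs i)))].
Definition Ok (s : {set 'I_n}) : bool := (s != set0) && pb (exists w, sigw w = s).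
Local Notation Pl := {s : {set 'I_n} | Ok s}.

Definition OtL (q : Pl) : Prop := exists x y z, inlit (LOtimes x y z) Phi /\
   forall w, sigw w = val q -> setin w (M x).
Definition Tgt (A : {set Pl}) (q : Pl) : Prop := OtL q /\
   exists u v w (p1 p2 : Pl), sigw u = val p1 /\ sigw v = val p2 /\ A = [set p1; p2]
     /\ is_pair w u v /\ sigw w = val q.
Definition Tm : target_map Pl := fun A => [set q | pb (Tgt A q)].
Definition Fm (v : var) : {set Pl} :=
  [set q | pb (forall w, sigw w = val q -> setin w (M v))].

Lemma sigw_eq w w' : seteq w w' -> sigw w = sigw w'.
Proof.
move=> E; apply/setP => i; rewrite !inE; apply: pb_iff; split.
- exact: setin_l.
- exact: setin_l (seteq_sym E).
Qed.

Lemma ix_lt v : v \in vars Phi -> index v vs < n.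
Proof. by move=> h; rewrite index_mem mem_undup. Qed.

Lemma ix_in v w (h : v \in vars Phi) :
  (Ordinal (ix_lt h) \in sigw w) = pb (setin w (M v)).
Proof. by rewrite inE /= nth_index // mem_undup. Qed.

Lemma sigw_det v w w' : v \in vars Phi -> sigw w = sigw w' ->
  setin w (M v) -> setin w' (M v).
Proof.
move=> h E H; have : Ordinal (ix_lt h) \in sigw w by rewrite ix_in; apply/pbP.
by rewrite E ix_in => /pbP.
Qed.

Lemma place_ex v w : v \in vars Phi -> setin w (M v) -> exists q : Pl, val q = sigw w.
Proof.
move=> h H.
have ok : Ok (sigw w).
  apply/andP; split; last by apply/pbP; exists w.
  apply/set0Pn; exists (Ordinal (ix_lt h)); rewrite ix_in; exact/pbP.
by exists (exist (fun s => Ok s) _ ok).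
Qed.

Lemma place_wit (q : Pl) : exists w, sigw w = val q.
Proof. by case: q => s /= /andP[_ /pbP]. Qed.

Lemma Fm_iff v (q : Pl) w : v \in vars Phi -> sigw w = val q ->
  (q \in Fm v <-> setin w (M v)).
Proof.
move=> h hw; rewrite inE; split.
- by move/pbP; apply.
- move=> H; apply/pbP => w' hw'; apply: sigw_det h _ H; by rewrite hw hw'.
Qed.


Lemma Fm_lit l : inlit l Phi -> fulfill_lit Tm Fm l.
Proof.
move=> Hl; have HS := sat_all HM Hl.
have hv : forall v, v \in lit_vars l -> v \in vars Phi by move=> v; exact: inlit_vars Hl.
case: l Hl HS hv => [x y z|x y z|x y z|x y] Hl /= HS hv.
- have hx : x \in vars Phi by apply: hv; rewrite !inE eqxx ?orbT.
  have hy : y \in vars Phi by apply: hv; rewrite !inE eqxx ?orbT.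
  have hz : z \in vars Phi by apply: hv; rewrite !inE eqxx ?orbT.
  apply/setP => q; have [w hw] := place_wit q; rewrite [in RHS]inE.
  apply/idP/orP.
  + move/(Fm_iff hx hw)/HS => [H|H]; [left; by apply/(Fm_iff hy hw) | right; by apply/(Fm_iff hz hw)].
  + move=> H; apply/(Fm_iff hx hw)/HS; case: H => H;
      [left; by apply/(Fm_iff hy hw) | right; by apply/(Fm_iff hz hw)].
- have hx : x \in vars Phi by apply: hv; rewrite !inE eqxx ?orbT.
  have hy : y \in vars Phi by apply: hv; rewrite !inE eqxx ?orbT.
  have hz : z \in vars Phi by apply: hv; rewrite !inE eqxx ?orbT.
  apply/setP => q; have [w hw] := place_wit q; rewrite [in RHS]inE.
  apply/idP/andP.
  + move/(Fm_iff hx hw)/HS => [H1 H2]; split; last by apply/(Fm_iff hy hw).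
    by apply/negP => /(Fm_iff hz hw).
  + move=> [/negP H2 H1]; apply/(Fm_iff hx hw)/HS; split; first by apply/(Fm_iff hy hw).
    by move/(Fm_iff hz hw).
- have hx : x \in vars Phi by apply: hv; rewrite !inE eqxx ?orbT.
  have hy : y \in vars Phi by apply: hv; rewrite !inE eqxx ?orbT.
  have hz : z \in vars Phi by apply: hv; rewrite !inE eqxx ?orbT.
  split; [|split].
  + move=> u v hu hv'.
    have [a ha] := place_wit u; have [b hb] := place_wit v.
    have Ha : setin a (M y) by apply/(Fm_iff hy ha).
    have Hb : setin b (M z) by apply/(Fm_iff hz hb).
    have Hw : setin (pr a b) (M x) by apply/HS; exists a, b; split => //; split => //; exact: pr_pair.
    have [r hr] := place_ex hx Hw.
    split.
    * apply/set0Pn; exists r; rewrite inE; apply/pbP; split.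
      - exists x, y, z; split => // w' hw'; apply: sigw_det hx _ Hw; by rewrite hw' hr.
      - by exists a, b, (pr a b), u, v; do 4! split => //; exact: pr_pair.
    * apply/subsetP => q; rewrite inE => /pbP [_ [a' [b' [w [p1 [p2 [ha' [hb' [E [hp hwq]]]]]]]]]].
      apply/(Fm_iff hx hwq)/HS.
      case: (set2_eq E) => [[e1 e2]|[e1 e2]]; subst p1 p2.
      - exists a', b'; split; first by apply/(Fm_iff hy ha').
        split => //; by apply/(Fm_iff hz hb').
      - exists b', a'; split; first by apply/(Fm_iff hy hb').
        split; last exact: is_pair_sym.
        by apply/(Fm_iff hz ha').
  + move=> q hq; have [w hw] := place_wit q.
    have := proj1 (Fm_iff hx hw) hq => /HS [u [v [Hu [Hv Hp]]]].
    have [pu hpu] := place_ex hy Hu; have [pv hpv] := place_ex hz Hv.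
    exists [set pu; pv]; split.
    * exists pu, pv; split; first by apply/(Fm_iff hy (esym hpu)).
      split => //; by apply/(Fm_iff hz (esym hpv)).
    * rewrite inE; apply/pbP; split.
      - exists x, y, z; split => //; by move: hq; rewrite inE => /pbP.
      - by exists u, v, w, pu, pv.
  + move=> A hA hno; rewrite disjoint_subset; apply/subsetP => q.
    rewrite !inE => /pbP [_ [u [v [w [p1 [p2 [hu [hv2 [E [hp hwq]]]]]]]]]]; apply/negP => hq; have {}hq : q \in Fm x by rewrite inE.
    have := proj1 (Fm_iff hx hwq) hq => /HS [u' [v' [Hu [Hv Hp]]]].
    case: (pair_inj hp Hp (seteq_refl w)) => [[e1 e2]|[e1 e2]]; apply: hno.
    * exists p1, p2; split; first by apply/(Fm_iff hy hu); apply: setin_r (seteq_refl _) _;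
        apply: setin_l (seteq_sym e1) Hu.
      split; last done.
      by apply/(Fm_iff hz hv2); apply: setin_l (seteq_sym e2) Hv.
    * exists p2, p1; split; first by apply/(Fm_iff hy hv2); apply: setin_l (seteq_sym e2) Hu.
      split; last by rewrite E setUC.
      by apply/(Fm_iff hz hu); apply: setin_l (seteq_sym e1) Hv.
- have hx : x \in vars Phi by apply: hv; rewrite !inE eqxx ?orbT.
  have hy : y \in vars Phi by apply: hv; rewrite !inE eqxx ?orbT.
  move=> E; apply: HS; apply: set_ext => t; split => H.
  + have [q hq] := place_ex hx H.
    have : q \in Fm x by apply/(Fm_iff hx (esym hq)).
    by rewrite E => /(Fm_iff hy (esym hq)).
  + have [q hq] := place_ex hy H.
    have : q \in Fm y by apply/(Fm_iff hy (esym hq)).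
    by rewrite -E => /(Fm_iff hx (esym hq)).
Qed.


Lemma acc_all S : acc_closed Tm S -> forall w (q : Pl), sigw w = val q -> q \in S.
Proof.
move=> [HS1 HS2]; elim=> B g IH q hq.
case: (classic (source_place Tm q)) => [hs|hns]; first exact: HS1.
have [A [hA hqA]] : exists A, is_node A /\ q \in Tm A.
  apply: NNPP => H; apply: hns => A hA; apply/negP => hin; apply: H; by exists A.
move: hqA; rewrite inE => /pbP [[x [y [z [Hl Hx]]]] _].
have Hw := Hx _ hq.
have HS := sat_all HM Hl; move: HS => /= HS.
have [u [v [Hu [Hv Hp]]]] := proj1 (HS _) Hw.
have hy : y \in vars Phi by apply: (inlit_vars Hl); rewrite !inE eqxx ?orbT.
have hz : z \in vars Phi by apply: (inlit_vars Hl); rewrite !inE eqxx ?orbT.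
have [pu hpu] := place_ex hy Hu; have [pv hpv] := place_ex hz Hv.
have pin : forall t p, setin t (@sup B g) -> val p = sigw t -> p \in S.
  move=> t p [b hb] hp; apply: (IH b); rewrite hp; apply: sigw_eq; exact: seteq_sym.
have Su := pin u pu ((proj2 (Hp u)) (or_introl (seteq_refl u))) hpu.
have Sv := pin v pv ((proj2 (Hp v)) (or_intror (seteq_refl v))) hpv.
have sub : [set pu; pv] \subset S by apply/subsetP => r; rewrite !inE => /orP[]/eqP ->.
apply: (subsetP (HS2 _ (node2 pu pv) sub)); rewrite inE; apply/pbP; split.
- by exists x, y, z.
- by exists u, v, (@sup B g), pu, pv; do 4! split => //.
Qed.

Lemma card_Pl : #|{: Pl}| <= 2 ^ n - 1.
Proof.
rewrite card_sig.
apply: leq_trans (_ : #|predC1 (set0 : {set 'I_n})| <= _).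
  by apply/subset_leq_card/subsetP => s; rewrite !inE => /andP[].
by rewrite cardC1 -cardsT -powersetT card_powerset cardsT card_ord subn1.
Qed.

Lemma sat_graph : exists (P : finType) (T : target_map P),
    (#|P| <= 2 ^ nvars Phi - 1)%N /\ accessible_graph T /\ fulfills T Phi.
Proof.
exists {s : {set 'I_n} | Ok s}, Tm; split; first exact: card_Pl.
split.
- move=> p S HS; have [w hw] := place_wit p; exact: acc_all HS _ _ hw.
- exists Fm; apply: fulfill_all => l Hl; exact: Fm_lit.
Qed.
End Sat.

Lemma fulfill_all' (P : finType) (T : target_map P) F Phi :
  fulfilling_map T F Phi -> forall l, inlit l Phi -> fulfill_lit T F l.
Proof. elim: Phi => //= l' P' IH [H1 H2] l [->|H] //; exact: IH. Qed.

Lemma sat_all' M Phi : (forall l, inlit l Phi -> sat_lit M l) -> satisfies M Phi.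
Proof. elim: Phi => //= l' P IH H; split; [apply: H; by left | apply: IH => l Hl; apply: H; by right]. Qed.

Inductive Code : Set := Atom of nat | Pair of Code & Code.

Fixpoint zn (k : nat) : WFSet :=
  match k with
  | 0 => @sup Empty_set (fun e => match e with end)
  | k'.+1 => @sup unit (fun _ => zn k')
  end.

Definition atomset (m : nat) : WFSet :=
  @sup (option bool) (fun o => match o with None => zn 0 | Some true => zn 1
                                         | Some false => zn m.+2 end).

Fixpoint interp (c : Code) : WFSet :=
  match c with Atom m => atomset m | Pair c1 c2 => pr (interp c1) (interp c2) end.

Lemma zn_inj a b : seteq (zn a) (zn b) -> a = b.
Proof.
elim: a b => [|a IH] [|b] //=.
- by case=> _ /(_ tt) [[]].
- by case=> /(_ tt) [[]].
- by case=> /(_ tt) [[] h] _; rewrite (IH _ h).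
Qed.

Lemma atom_not_pr m a b : ~ seteq (atomset m) (pr a b).
Proof.
move=> E.
have mem : forall k, (k = 0 \/ k = 1 \/ k = m.+2) -> seteq (zn k) a \/ seteq (zn k) b.
  move=> k hk; apply/pr_pair; apply: setin_r E _.
  by case: hk => [->|[->|->]]; [exists None | exists (Some true) | exists (Some false)];
    exact: seteq_refl.
have key : forall i j c, seteq (zn i) c -> seteq (zn j) c -> i = j.
  by move=> i j c h1 h2; apply: zn_inj; apply: seteq_trans h1 (seteq_sym h2).
have h0 := mem 0 (or_introl erefl).
have h1 := mem 1 (or_intror (or_introl erefl)).
have h2 := mem m.+2 (or_intror (or_intror erefl)).
case: h0 => h0; case: h1 => h1; try by have := key _ _ _ h0 h1.
- by case: h2 => h2; [have := key _ _ _ h0 h2 | have := key _ _ _ h1 h2].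
- by case: h2 => h2; [have := key _ _ _ h1 h2 | have := key _ _ _ h0 h2].
Qed.

Lemma atom_inj m m' : seteq (atomset m) (atomset m') -> m = m'.
Proof.
move=> E.
have : setin (zn m.+2) (atomset m') by apply: setin_r E _; exists (Some false); exact: seteq_refl.
by case=> [[[]|]] /zn_inj // [].
Qed.

Lemma is_pair_trans w X a b : seteq w X -> is_pair X a b -> is_pair w a b.
Proof.
move=> E H t; rewrite -H; split; [exact: setin_r E | exact: setin_r (seteq_sym E)].
Qed.

Section Graph.
Variables (P : finType) (T : target_map P) (F : var -> {set P}) (Phi : conjunction).
Hypotheses (HF : fulfilling_map T F Phi) (Hacc : accessible_graph T).

Definition srcb (p : P) := [forall A : {set P}, is_node A ==> (p \notin T A)].
Lemma srcbP p : reflect (source_place T p) (srcb p).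
Proof.
apply: (iffP forallP) => H A; [move=> hA; exact: (implyP (H A) hA) | apply/implyP; exact: H].
Qed.

Fixpoint pc (c : Code) : option (P * nat) :=
  match c with
  | Atom m => match [pick p : P | (enum_rank p : nat) == m %% #|P|] with
              | Some p => if srcb p then Some (p, m %/ #|P|) else None
              | None => None end
  | Pair c1 c2 =>
      match pc c1, pc c2 with
      | Some (p1, k1), Some (p2, k2) =>
          if #|T [set p1; p2]| == 0 then None
          else Some (nth p1 (enum (T [set p1; p2])) ((k1 + k2) %% #|T [set p1; p2]|),
                     (k1 + k2) %/ #|T [set p1; p2]|)
      | _, _ => None
      end
  end.

Lemma pc_swap c1 c2 : pc (Pair c1 c2) = pc (Pair c2 c1).
Proof.
rewrite /=; case: (pc c1) => [[p1 k1]|]; case: (pc c2) => [[p2 k2]|] //.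
rewrite [[set p2; p1]]setUC addnC; case: ifP => // h; congr (Some (_, _)).
apply: set_nth_default; by rewrite -cardE ltn_pmod // lt0n h.
Qed.

Lemma interp_pc c d : seteq (interp c) (interp d) -> pc c = pc d.
Proof.
elim: c d => [m|c1 IH1 c2 IH2] [m'|d1 d2] E.
- by rewrite (atom_inj E).
- by case: (atom_not_pr E).
- by case: (atom_not_pr (seteq_sym E)).
- case: (pair_inj (pr_pair _ _) (pr_pair _ _) E) => [[e1 e2]|[e1 e2]].
  + by rewrite /= (IH1 _ e1) (IH2 _ e2).
  + by rewrite pc_swap /= (IH1 _ e1) (IH2 _ e2).
Qed.


Definition inF (x : var) (c : Code) : bool :=
  if pc c is Some (q, _) then q \in F x else false.

Definition Mx (x : var) : WFSet := @sup {c : Code | inF x c} (fun s => interp (proj1_sig s)).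

Lemma setin_M t x : setin t (Mx x) <-> exists c, inF x c /\ seteq t (interp c).
Proof.
split; first by case=> [[c hc] h]; exists c.
by case=> c [hc h]; exists (exist _ c hc).
Qed.

Lemma interp_M c x : setin (interp c) (Mx x) <-> inF x c.
Proof.
split.
- by case/setin_M => d [hd E]; rewrite /inF (interp_pc E).
- by move=> h; apply/setin_M; exists c; split => //; exact: seteq_refl.
Qed.

Lemma pc_pair_inv c1 c2 q k : pc (Pair c1 c2) = Some (q, k) ->
  exists p1 k1 p2 k2, pc c1 = Some (p1, k1) /\ pc c2 = Some (p2, k2) /\ q \in T [set p1; p2].
Proof.
rewrite /=; case: (pc c1) => [[p1 k1]|] //; case: (pc c2) => [[p2 k2]|] //.
case: ifP => // h [<- _]; exists p1, k1, p2, k2; do 2! split => //.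
by rewrite -mem_enum; apply: mem_nth; rewrite -cardE ltn_pmod // lt0n h.
Qed.

Lemma pc_atom_src m q k : pc (Atom m) = Some (q, k) -> source_place T q.
Proof. by rewrite /=; case: pickP => // p _; case: ifP => // /srcbP h [<- _]. Qed.

Lemma pc_pair_some c1 c2 p1 k1 p2 k2 : pc c1 = Some (p1, k1) -> pc c2 = Some (p2, k2) ->
  T [set p1; p2] != set0 -> exists q k, pc (Pair c1 c2) = Some (q, k) /\ q \in T [set p1; p2].
Proof.
move=> h1 h2 hne.
have h : (#|T [set p1; p2]| == 0) = false by rewrite cards_eq0; exact: negbTE.
eexists; eexists; rewrite /= h1 h2 h; split; first reflexivity.
by rewrite -mem_enum; apply: mem_nth; rewrite -cardE ltn_pmod // lt0n h.
Qed.

Lemma colors (p : P) k : exists c, pc c = Some (p, k).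
Proof.
pose S := [set p : P | pb (forall k, exists c, pc c = Some (p, k))].
suff : p \in S by rewrite inE => /pbP.
apply: Hacc; split.
- move=> p0 hs; rewrite inE; apply/pbP => k0.
  have N0 : 0 < #|P| by apply: leq_ltn_trans _ (ltn_ord (enum_rank p0)).
  exists (Atom (k0 * #|P| + enum_rank p0)).
  have e1 : (k0 * #|P| + enum_rank p0) %% #|P| = enum_rank p0 by rewrite modnMDl modn_small.
  have e2 : (k0 * #|P| + enum_rank p0) %/ #|P| = k0 by rewrite divnMDl // divn_small ?addn0.
  rewrite /= e1 e2; case: pickP => [p' /eqP H|H].
  + have -> : p' = p0 by apply: enum_rank_inj; apply: val_inj.
    by rewrite (introT (srcbP p0) hs).
  + by move: (H p0); rewrite eqxx.
- move=> A hA hsub; apply/subsetP => q hq; rewrite inE; apply/pbP => k0.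
  have [p1 [p2 EA]] := node_inv hA; subst A.
  have : p1 \in S by apply: (subsetP hsub); rewrite !inE eqxx.
  rewrite inE => /pbP H1.
  have : p2 \in S by apply: (subsetP hsub); rewrite !inE eqxx orbT.
  rewrite inE => /pbP H2.
  set m := #|T [set p1; p2]|.
  have m0 : 0 < m by apply/card_gt0P; exists q.
  set j := index q (enum (T [set p1; p2])).
  have hj : j < m by rewrite /m cardE index_mem mem_enum.
  have [c1 hc1] := H1 0; have [c2 hc2] := H2 (k0 * m + j).
  exists (Pair c1 c2); rewrite /= hc1 hc2 -/m.
  have -> : (m == 0) = false by move: m0; rewrite lt0n => /negbTE.
  rewrite add0n modnMDl modn_small // divnMDl // divn_small // addn0.
  by rewrite nth_index // mem_enum.
Qed.

Lemma Mx_lit l : inlit l Phi -> sat_lit Mx l.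
Proof.
move=> Hl; have HL := fulfill_all' HF Hl.
case: l Hl HL => [x y z|x y z|x y z|x y] Hl /= HL.
- have iU : forall c, inF x c = inF y c || inF z c.
    by move=> c; rewrite /inF; case: (pc c) => [[q _]|] //; rewrite HL inE.
  move=> w; split.
  + case/setin_M => c [hc E]; move: hc; rewrite iU => /orP[] h;
      [left|right]; apply/setin_M; by exists c.
  + by case=> /setin_M [c [hc E]]; apply/setin_M; exists c; rewrite iU hc ?orbT.
- have iD : forall c, inF x c = ~~ inF z c && inF y c.
    by move=> c; rewrite /inF; case: (pc c) => [[q _]|] //; rewrite HL inE.
  move=> w; split.
  + case/setin_M => c [hc E]; move: hc; rewrite iD => /andP[hz hy]; split.
    * by apply/setin_M; exists c.
    * case/setin_M => d [hd E']; move/negP: hz; apply.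
      by rewrite /inF (interp_pc (seteq_trans (seteq_sym E) E')).
  + case=> /setin_M [c [hc E]] hn; apply/setin_M; exists c; split => //.
    rewrite iD hc andbT; apply/negP => hz; apply: hn; apply/setin_M; by exists c.
- case: HL => [Hc1 [Hc2 Hc3]] w; split.
  + case/setin_M => c [hc E].
    case hpc: (pc c) hc => [[q k]|]; rewrite /inF hpc // => hq.
    case: c E hpc => [m|c1 c2] E hpc.
    * have hs := pc_atom_src hpc.
      have [A [[u [v [_ [_ ->]]]] hqA]] := Hc2 q hq.
      by move: (hs _ (node2 u v)); rewrite hqA.
    * have [p1 [k1 [p2 [k2 [h1 [h2 hqT]]]]]] := pc_pair_inv hpc.
      case: (classic (in_otimes (F y) (F z) [set p1; p2])) => [[u [v [hu [hv Eq]]]] | hno].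
      - have hp := is_pair_trans E (pr_pair (interp c1) (interp c2)).
        case: (set2_eq Eq) => [[e1 e2]|[e1 e2]]; subst u v.
        + exists (interp c1), (interp c2); split; first by apply/interp_M; rewrite /inF h1.
          by split => //; apply/interp_M; rewrite /inF h2.
        + exists (interp c2), (interp c1); split; first by apply/interp_M; rewrite /inF h2.
          split; last exact: is_pair_sym.
          by apply/interp_M; rewrite /inF h1.
      - by move: (disjointFr (Hc3 _ (node2 p1 p2) hno) hqT); rewrite hq.
  + case=> u [v [/setin_M [c1 [hc1 Eu]] [/setin_M [c2 [hc2 Ev]] Hp]]].
    case hp1: (pc c1) hc1 => [[p1 k1]|]; rewrite /inF hp1 // => hy.
    case hp2: (pc c2) hc2 => [[p2 k2]|]; rewrite /inF hp2 // => hz.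
    have [hne hsub] := Hc1 _ _ hy hz.
    have [q [k [hpc hqT]]] := pc_pair_some hp1 hp2 hne.
    apply/setin_M; exists (Pair c1 c2); split; first by rewrite /inF hpc (subsetP hsub).
    apply: set_ext => t; rewrite Hp pr_pair; split => [[h|h]|[h|h]].
    * by left; apply: seteq_trans h Eu.
    * by right; apply: seteq_trans h Ev.
    * by left; apply: seteq_trans h (seteq_sym Eu).
    * by right; apply: seteq_trans h (seteq_sym Ev).
- move=> E0; have E : seteq (Mx x) (Mx y) := E0; apply: HL; apply/setP => q.
  have [c hc] := colors q 0.
  have iq : forall v, (q \in F v) = inF v c by move=> v; rewrite /inF hc.
  rewrite !iq; apply/idP/idP => h.
  + apply: (proj1 (interp_M c y)); apply: setin_r E _; exact: (proj2 (interp_M c x)).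
  + apply: (proj1 (interp_M c x)); apply: setin_r (seteq_sym E) _; exact: (proj2 (interp_M c y)).
Qed.

Lemma graph_sat : satisfiable Phi.
Proof. exists Mx; apply: sat_all' => l Hl; exact: Mx_lit. Qed.
End Graph.

Theorem mainTheorem1 (Phi : conjunction) :
  satisfiable Phi <->
  exists (P : finType) (T : target_map P),
    (#|P| <= 2 ^ nvars Phi - 1)%N /\ accessible_graph T /\ fulfills T Phi.
Proof.
split.
- case=> M HM; exact: sat_graph HM.
- case=> P [T [_ [Hacc [F HF]]]]; exact: (graph_sat HF Hacc).
Qed.
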